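(* Let $\varepsilon_1,\dots,\varepsilon_n\in\mathbb T=\partial\mathbb D$ be pairwise distinct. Then for any $\lambda_1,\dots,\lambda_n\in\mathbb D$ there exist $\beta\in\mathbb D$ and a Blaschke product $\mathcal B$ of order at most $n$ such that $\mathcal B(0)=0$ and $\mathcal B(\varepsilon_j\beta)=\lambda_j$ for $j=1,\dots,n$.
   Context: $\mathbb D$ is the open unit disc in $\mathbb C$ and $\mathbb T$ its boundary circle. A (finite) Blaschke product of order $k$ is a function $\zeta\mapsto e^{i\theta}\prod_{j=1}^k\frac{\zeta-a_j}{1-\bar a_j\zeta}$ with $a_j\in\mathbb D$, $\theta\in\mathbb R$. *)

(* Defs.v *)
From mathcomp Require Import all_boot all_order all_algebra.
From mathcomp Require Import reals.
From mathcomp Require Export complex.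
Set Implicit Arguments. Unset Strict Implicit. Unset Printing Implicit Defensive.
Import Order.TTheory GRing.Theory Num.Theory.
Local Open Scope ring_scope.

Definition blaschke (R : realType) (u : R[i]) (a : seq R[i]) (z : R[i]) : R[i] :=
  u * \prod_(x <- a) ((z - x) / (1 - x^* * z)).

Definition is_blaschke_of_order (R : realType) (B : R[i] -> R[i]) (k : nat) : Prop :=
  exists (u : R[i]) (a : seq R[i]),
    [/\ `|u| = 1, size a = k, all (fun x => `|x| < 1) a
      & forall z, B z = blaschke u a z].

(* Main.v *)
From HB Require Import structures.
Require Import Defs.
From mathcomp Require Import all_boot all_order all_algebra.
From mathcomp Require Import reals complex.
From mathcomp Require Import ring lra zify.
From mathcomp Require Import all_classical topology normedtype.
Import Order.TTheory GRing.Theory Num.Theory.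
Import numFieldNormedType.Exports.
Set Implicit Arguments. Unset Strict Implicit.
Local Open Scope ring_scope. Local Open Scope classical_set_scope.
HB.instance Definition _ (R : realType) := PseudoPointedMetric.copy R[i] (R[i])^o.
HB.instance Definition _ (R : realType) := NormedModule.copy R[i] (R[i])^o.

Section Disc.
Variable R : realType.
Implicit Types a z g w : R[i].

Lemma disc_id a z : `|1 - a^* * z| ^+ 2 - `|z - a| ^+ 2 = (1 - `|a| ^+ 2) * (1 - `|z| ^+ 2).
Proof.
rewrite !normCK !rmorphB /= !rmorph1 rmorphM /= conjCK; ring.
Qed.

Lemma nn (x : R[i]) : `|x| \is Num.nneg. Proof. by rewrite nnegrE. Qed.

Lemma sq_lt (x y : R[i]) : (`|x| < `|y|) = (`|x| ^+ 2 < `|y| ^+ 2).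
Proof. by rewrite ltr_pXn2r // nnegrE. Qed.
Lemma sq_le (x y : R[i]) : (`|x| <= `|y|) = (`|x| ^+ 2 <= `|y| ^+ 2).
Proof. by rewrite ler_pXn2r // nnegrE. Qed.

Lemma lt1_sq (x : R[i]) : (`|x| < 1) = (`|x| ^+ 2 < 1).
Proof. by rewrite -{1}normr1 sq_lt normr1 expr1n. Qed.
Lemma le1_sq (x : R[i]) : (`|x| <= 1) = (`|x| ^+ 2 <= 1).
Proof. by rewrite -{1}normr1 sq_le normr1 expr1n. Qed.

Lemma D1 a z : `|a| < 1 -> `|z| < 1 -> `|z - a| < `|1 - a^* * z|.
Proof.
rewrite !lt1_sq sq_lt => ha hz; rewrite -subr_gt0 disc_id.
by apply: mulr_gt0; rewrite subr_gt0.
Qed.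

Lemma D2 a z : `|a| < 1 -> 1 <= `|z| -> `|1 - a^* * z| <= `|z - a|.
Proof.
rewrite lt1_sq => ha; rewrite -{1}normr1 sq_le normr1 expr1n => hz.
rewrite sq_le -subr_ge0.
have -> : `|z - a| ^+ 2 - `|1 - a^* * z| ^+ 2 = (1 - `|a| ^+ 2) * (`|z| ^+ 2 - 1).
  by rewrite -opprB disc_id; ring.
by apply: mulr_ge0; rewrite subr_ge0 // ltW.
Qed.

Lemma D3 a z : `|z| = 1 -> `|1 - a^* * z| = `|z - a|.
Proof.
move=> hz; apply/eqP; rewrite eq_le !sq_le.
have := disc_id a z; rewrite hz expr1n subrr mulr0 => /eqP; rewrite subr_eq0 => /eqP ->.
by rewrite lexx.
Qed.

Lemma D1le a z : `|a| <= 1 -> `|z| <= 1 -> `|z - a| <= `|1 - a^* * z|.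
Proof.
rewrite !le1_sq sq_le => ha hz; rewrite -subr_ge0 disc_id.
by apply: mulr_ge0; rewrite subr_ge0.
Qed.

Lemma cV (x : R[i]) : (x^-1)^* = (x^*)^-1. Proof. exact: fmorphV. Qed.
Lemma cB (x y : R[i]) : (x - y)^* = x^* - y^*. Proof. exact: rmorphB. Qed.
Lemma cD (x y : R[i]) : (x + y)^* = x^* + y^*. Proof. exact: rmorphD. Qed.
Lemma cM (x y : R[i]) : (x * y)^* = x^* * y^*. Proof. exact: rmorphM. Qed.
Lemma c1 : (1 : R[i])^* = 1. Proof. exact: rmorph1. Qed.
Lemma cPr (s : seq R[i]) (f : R[i] -> R[i]) : (\prod_(x <- s) f x)^* = \prod_(x <- s) (f x)^*.
Proof. exact: rmorph_prod. Qed.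

Definition bl a z := (z - a) / (1 - a^* * z).
Definition mobi g y := (y + g) / (1 + g^* * y).

Lemma den_ne0 a z : `|a| < 1 -> `|z| <= 1 -> 1 - a^* * z != 0.
Proof.
move=> ha hz; apply/negP; rewrite subr_eq0 => /eqP h.
have : `|a^* * z| < 1.
  rewrite normrM norm_conjC; apply: (@le_lt_trans _ _ (`|a| * 1)).
    by rewrite ler_wpM2l.
  by rewrite mulr1.
by rewrite -h normr1 ltxx.
Qed.

Lemma bl_lt1 a z : `|a| < 1 -> `|z| < 1 -> `|bl a z| < 1.
Proof.
move=> ha hz; rewrite /bl normrM normrV ?unitfE ?normr_eq0 ?den_ne0 ?ltW //.
by rewrite ltr_pdivrMr ?normr_gt0 ?den_ne0 ?ltW // mul1r D1.
Qed.

Lemma bl_eq1 a z : `|z| = 1 -> 1 - a^* * z != 0 -> `|bl a z| = 1.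
Proof.
move=> hz hd; rewrite /bl normrM normrV ?unitfE ?normr_eq0 //.
by rewrite -(@D3 a z hz) mulfV // normr_eq0.
Qed.

Lemma bl_aa a : bl a a = 0. Proof. by rewrite /bl subrr mul0r. Qed.
Lemma mobi0 g : mobi g 0 = g. Proof. by rewrite /mobi add0r mulr0 addr0 divr1. Qed.

Lemma mobi_bl g w : `|g| < 1 -> `|w| <= 1 -> mobi g (bl g w) = w.
Proof.
move=> hg hw; have hd := den_ne0 hg hw; rewrite /mobi /bl.
have hd2 : 1 + g^* * ((w - g) / (1 - g^* * w)) != 0.
  have -> : 1 + g^* * ((w - g) / (1 - g^* * w)) = (1 - g^* * g) / (1 - g^* * w).
    by field.
  by rewrite mulf_neq0 ?invr_eq0 // den_ne0 ?ltW.
have hgg : 1 - g^* * g != 0 by rewrite den_ne0 ?ltW.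
apply: (mulIf hd2); rewrite mulfVK //; field.
exact: hd.
Qed.

End Disc.

Section Mob.
Variable R : realType.
Implicit Types a : seq R[i].
Implicit Types u z g : R[i].

Definition Pp u a : {poly R[i]} := u *: \prod_(x <- a) ('X - x%:P).
Definition Qp a : {poly R[i]} := \prod_(x <- a) (1 - (x^*)%:P * 'X).

Lemma hornerP u a z : (Pp u a).[z] = u * \prod_(x <- a) (z - x).
Proof. by rewrite /Pp hornerZ horner_prod; under eq_bigr do rewrite hornerXsubC. Qed.

Lemma hornerQ a z : (Qp a).[z] = \prod_(x <- a) (1 - x^* * z).
Proof. by rewrite /Qp horner_prod; under eq_bigr do rewrite !hornerE. Qed.

Lemma blaschkeE u a z : blaschke u a z = (Pp u a).[z] / (Qp a).[z].
Proof. by rewrite /blaschke prodf_div hornerP hornerQ mulrA. Qed.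

Lemma Q_coef a : (size (Qp a) <= (size a).+1)%N /\ (Qp a)`_(size a) = \prod_(x <- a) (- x^*).
Proof.
elim: a => [|x a [IHs IHc]]; first by rewrite /Qp !big_nil size_poly1 coef1.
have E : Qp (x :: a) = Qp a - (x^*)%:P * ('X * Qp a).
  by rewrite /Qp big_cons mulrBl mul1r mulrA.
split.
  rewrite E; apply: (leq_trans (size_polyD _ _)); rewrite geq_max /= size_polyN.
  rewrite (leq_trans IHs) //= mul_polyC; apply: (leq_trans (size_scale_leq _ _)).
  have [->|Q0] := eqVneq (Qp a) 0; first by rewrite mulr0 size_poly0.
  by rewrite mulrC size_mulX.
rewrite E coefB coefCM coefXM /= IHc big_cons.
have -> : (Qp a)`_(size a).+1 = 0.
  by move/leq_sizeP: IHs; apply.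
by rewrite sub0r mulNr.
Qed.

Lemma P_coef u a : u != 0 -> size (Pp u a) = (size a).+1 /\ (Pp u a)`_(size a) = u.
Proof.
move=> hu; rewrite /Pp size_scale // size_prod_XsubC; split => //.
rewrite coefZ.
have := monic_prod_XsubC a predT id; rewrite monicE lead_coefE size_prod_XsubC /=.
by move/eqP ->; rewrite mulr1.
Qed.

Definition inD a := all (fun x : R[i] => `|x| < 1) a.

Lemma Q_ne0 a z : inD a -> `|z| <= 1 -> (Qp a).[z] != 0.
Proof.
move=> ha hz; rewrite hornerQ prodf_seq_eq0; apply/hasPn => x xa /=.
by rewrite den_ne0 //; move/allP: ha; apply.
Qed.

Lemma mulZprod z (s : seq R[i]) (f : R[i] -> R[i]) :
  z ^+ size s * \prod_(x <- s) f x = \prod_(x <- s) (z * f x).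
Proof.
elim: s => [|x s IH]; first by rewrite !big_nil expr0 mulr1.
by rewrite !big_cons /= exprS -IH; ring.
Qed.

Lemma mob_blaschke u a g : `|u| = 1 -> inD a -> `|g| < 1 ->
  exists u' a', [/\ `|u'| = 1, size a' = size a, inD a' &
    forall z, z != 0 -> `|z| < 1 -> blaschke u' a' z = mobi g (blaschke u a z)].
Proof.
move=> hu ha hg.
have u0 : u != 0 by rewrite -normr_eq0 hu oner_eq0.
set N := Pp u a + g *: Qp a.
have [sP cP] := P_coef a u0.
have [sQ cQ] := Q_coef a.
set m := size a in sP cP sQ cQ *.
have cN : N`_m = u + g * \prod_(x <- a) (- x^*).
  by rewrite /N coefD cP coefZ cQ.
have cN0 : N`_m != 0.
  rewrite cN; apply/negP => /eqP h.
  have : `|u| = `|g * \prod_(x <- a) (- x^*)|.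
    by move/eqP: h; rewrite addr_eq0 => /eqP ->; rewrite normrN.
  rewrite hu normrM normr_prod => h1.
  have h2 : \prod_(x <- a) `|- x^*| <= 1.
    rewrite big_seq; apply: prodr_ile1 => x xa; rewrite normr_ge0 normrN norm_conjC /=.
    exact: ltW (allP ha x xa).
  have : `|g| * \prod_(x <- a) `|- x^*| < 1.
    apply: (@le_lt_trans _ _ (`|g| * 1)); last by rewrite mulr1.
    by rewrite ler_wpM2l.
  by rewrite -h1 ltxx.
have sN : size N = m.+1.
  apply/eqP; rewrite eqn_leq; apply/andP; split.
    apply: (leq_trans (size_polyD _ _)); rewrite geq_max sP leqnn /=.
    exact: (leq_trans (size_scale_leq _ _)).
  by rewrite ltnNge; apply/negP => /leq_sizeP /(_ m (leqnn _)) /eqP; rewrite (negPf cN0).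
have lN : lead_coef N = N`_m by rewrite lead_coefE sN.
have [rs Nrs] := closed_field_poly_normal N.
set c := lead_coef N in Nrs.
have c0 : c != 0 by rewrite /c lN.
have srs : size rs = m.
  by have := sN; rewrite Nrs size_scale // size_prod_XsubC => -[].
have Nev z : N.[z] = c * \prod_(r <- rs) (z - r).
  by rewrite Nrs hornerZ horner_prod; under eq_bigr do rewrite hornerXsubC.
have NPQ z : N.[z] = (Pp u a).[z] + g * (Qp a).[z] by rewrite /N !hornerE.
have rsD : inD rs.
  apply/allP => r rin /=; rewrite real_ltNge ?realE ?normr_ge0 ?ler01 //.
  apply/negP => hr.
  have N0 : N.[r] = 0.
    by rewrite Nev; apply/eqP; rewrite mulf_eq0 prodf_seq_eq0; apply/orP; right; apply/hasP; exists r => //; rewrite subrr eqxx.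
  have hPQ : `|(Qp a).[r]| <= `|(Pp u a).[r]|.
    rewrite hornerP hornerQ normrM hu mul1r !normr_prod big_seq [X in _ <= X]big_seq.
    apply: ler_prod => x xa; rewrite normr_ge0 /=; apply: D2 => //.
    exact: (allP ha x xa).
  have hP : (Pp u a).[r] = - (g * (Qp a).[r]).
    by apply/eqP; rewrite -addr_eq0 -NPQ N0.
  have [Q0|Q0] := eqVneq (Qp a).[r] 0.
    move: hP; rewrite Q0 mulr0 oppr0 hornerP => /eqP; rewrite mulf_eq0 (negPf u0) /=.
    rewrite prodf_seq_eq0 => /hasP [x xa /=]; rewrite subr_eq0 => /eqP rx.
    move/allP: ha => /(_ x xa) /=; rewrite -rx => hx.
    by move: (lt_le_trans hx hr); rewrite ltxx.
  move: hPQ; rewrite hP normrN normrM.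
  have : `|g| * `|(Qp a).[r]| < `|(Qp a).[r]|.
    by rewrite gtr_pMl // normr_gt0.
  by move=> h1 h2; move: (lt_le_trans h1 h2); rewrite ltxx.
have refl z : z != 0 -> (Qp a).[z] + g^* * (Pp u a).[z] = u * c^* * \prod_(r <- rs) (1 - r^* * z).
  move=> z0; set w := (z^*)^-1.
  have wc : w^* = z^-1 by rewrite /w cV conjCK.
  have := congr1 (fun x => z ^+ m * x^*) (Nev w).
  rewrite NPQ hornerP hornerQ /= cD !cM !cPr.
  under eq_bigr do rewrite cB wc.
  under [in X in _ = X -> _]eq_bigr do rewrite cB wc.
  under [in X in _ * (_ + _ * X) = _ -> _]eq_bigr do rewrite cB cM c1 conjCK wc.
  have h1 : z ^+ m * \prod_(i <- a) (z^-1 - i^*) = (Qp a).[z].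
    rewrite /m mulZprod hornerQ; apply: eq_bigr => x _; field; exact: z0.
  have h2 : z ^+ m * \prod_(i <- a) (1 - i / z) = \prod_(i <- a) (z - i).
    rewrite /m mulZprod; apply: eq_bigr => x _; field; exact: z0.
  have h3 : z ^+ m * \prod_(i <- rs) (z^-1 - i^*) = \prod_(r <- rs) (1 - r^* * z).
    rewrite -srs mulZprod; apply: eq_bigr => x _; field; exact: z0.
  rewrite mulrDr mulrCA h1 mulrCA h2 mulrCA h3 => E.
  have uu : u * u^* = 1 by rewrite -normCK hu expr1n.
  have E2 := congr1 (fun x => u * x) E; move: E2 => /=.
  rewrite mulrDr mulrA uu mul1r => E3; rewrite hornerP -mulrA -E3; ring.
exists (c / (u * c^*)), rs; split => //.
  rewrite normrM normrV ?unitfE ?mulf_neq0 ?conjC_eq0 // normrM norm_conjC hu mul1r.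
  by rewrite divff // normr_eq0.
move=> z z0 zD.
rewrite blaschkeE /mobi blaschkeE.
have Q0 : (Qp a).[z] != 0 by apply: Q_ne0 => //; exact: ltW.
have -> : (Pp u a).[z] / (Qp a).[z] + g = ((Pp u a).[z] + g * (Qp a).[z]) / (Qp a).[z].
  by field.
have -> : 1 + g^* * ((Pp u a).[z] / (Qp a).[z]) = ((Qp a).[z] + g^* * (Pp u a).[z]) / (Qp a).[z].
  by field.
rewrite invf_div mulrA divfK // -NPQ refl // Nev hornerP hornerQ !invfM; ring.
Qed.

End Mob.

Section Cont.
Variable R : realType.
Definition ccont (F : R -> R[i]) (s0 : R) := F s @[s --> s0] --> F s0.

Lemma cc_cst (c : R[i]) s0 : ccont (fun _ => c) s0.
Proof. exact: cvg_cst. Qed.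

Lemma normC_real (x : R) : `|(x%:C)%C| = ((`|x|)%:C)%C :> R[i].
Proof.
have [x0|x0] := leP 0 x.
  by rewrite !ger0_norm // ler0c.
rewrite !ltr0_norm ?ltcR //; by apply/eqP; rewrite eq_complex /= oppr0 !eqxx.
Qed.

Lemma cc_emb s0 : ccont (fun s => (s%:C)%C) s0.
Proof.
apply/cvgrPdist_lt => e e0.
have e0' : 0 < complex.Re e by move: e0; rewrite ltcE => /andP[].
have eE : e = ((complex.Re e)%:C)%C.
  by move: e0; rewrite ltcE => /andP[/eqP h _]; case: e h e0' => a b /= ->.
have hid : (fun s : R => s) s @[s --> s0] --> s0 by exact: cvg_id.
move/cvgrPdist_lt: hid => /(_ _ e0').
apply: filterS => s hs.
have -> : (s0%:C - s%:C)%C = ((s0 - s)%:C)%C :> R[i].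
  by apply/eqP; rewrite eq_complex /= subr0 !eqxx.
by rewrite normC_real [X in _ < X]eE ltcR.
Qed.

Lemma cc_add F G s0 : ccont F s0 -> ccont G s0 -> ccont (fun s => F s + G s) s0.
Proof. move=> hF hG; exact: (@cvgD R[i] R[i] R (nbhs s0) _ F G _ _ hF hG). Qed.
Lemma cc_sub F G s0 : ccont F s0 -> ccont G s0 -> ccont (fun s => F s - G s) s0.
Proof. move=> hF hG; exact: (@cvgB R[i] R[i] R (nbhs s0) _ F G _ _ hF hG). Qed.
Lemma cc_mul F G s0 : ccont F s0 -> ccont G s0 -> ccont (fun s => F s * G s) s0.
Proof. move=> hF hG; exact: (@cvgM R[i] R (nbhs s0) _ F G _ _ hF hG). Qed.
Lemma cc_inv F s0 : F s0 != 0 -> ccont F s0 -> ccont (fun s => (F s)^-1) s0.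
Proof. move=> h hF; exact: (@cvgV R[i] R (nbhs s0) _ F _ h hF). Qed.
Lemma cc_conj F s0 : ccont F s0 -> ccont (fun s => (F s)^*) s0.
Proof.
move=> hF; apply/cvgrPdist_lt => e e0.
have := (@cvgrPdist_lt R[i] R[i] R (nbhs s0) _ F (F s0)).1 hF e e0.
move=> h; have h2 : \forall t \near s0, `|F s0 - F t| < e := h _.
near=> t; rewrite -cB norm_conjC; near: t; exact: h2.
Unshelve. all: by end_near.
Qed.
Lemma cc_div F G s0 : G s0 != 0 -> ccont F s0 -> ccont G s0 -> ccont (fun s => F s / G s) s0.
Proof. move=> h hF hG; exact: (cc_mul hF (cc_inv h hG)). Qed.
Lemma cc_bl F G s0 : 1 - (F s0)^* * G s0 != 0 -> ccont F s0 -> ccont G s0 ->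
  ccont (fun s => bl (F s) (G s)) s0.
Proof.
move=> h hF hG; rewrite /bl.
have h1 := cc_sub hG hF.
have h2 := cc_sub (@cc_cst 1 s0) (cc_mul (cc_conj hF) hG).
exact: (@cc_div (fun s => G s - F s) (fun s => 1 - (F s)^* * G s) s0 h h1 h2).
Qed.

End Cont.

Section Real.
Variable R : realType.
Definition nr (x : R[i]) : R := complex.Re `|x|.
Lemma nrE (x : R[i]) : `|x| = ((nr x)%:C)%C.
Proof. by rewrite /nr normc_def. Qed.
Lemma nr_ge0 (x : R[i]) : 0 <= nr x.
Proof. rewrite -(lecR (0:R)) -nrE; exact: normr_ge0. Qed.
Lemma lecR' (a b : R) : (((a%:C)%C : R[i]) <= (b%:C)%C) = (a <= b). Proof. exact: lecR. Qed.
Lemma ltcR' (a b : R) : (((a%:C)%C : R[i]) < (b%:C)%C) = (a < b). Proof. exact: ltcR. Qed.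
Lemma addC (a b : R) : ((a + b)%:C)%C = (a%:C)%C + (b%:C)%C :> R[i].
Proof. by apply/eqP; rewrite eq_complex /= addr0 !eqxx. Qed.
Lemma subC (a b : R) : ((a - b)%:C)%C = (a%:C)%C - (b%:C)%C :> R[i].
Proof. by apply/eqP; rewrite eq_complex /= subr0 !eqxx. Qed.
Lemma mulC (a b : R) : ((a * b)%:C)%C = (a%:C)%C * (b%:C)%C :> R[i].
Proof. by apply/eqP; rewrite eq_complex /= !mulr0 subr0 mul0r addr0 !eqxx. Qed.
Lemma oneC : ((1 : R)%:C)%C = 1 :> R[i]. Proof. by []. Qed.
Lemma nr_le (x y : R[i]) : (`|x| <= `|y|) = (nr x <= nr y). Proof. by rewrite !nrE lecR. Qed.
Lemma nr_lt (x y : R[i]) : (`|x| < `|y|) = (nr x < nr y). Proof. by rewrite !nrE ltcR. Qed.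
Lemma nr_lt1 (x : R[i]) : (`|x| < 1) = (nr x < 1). Proof. by rewrite nrE -oneC ltcR. Qed.
Lemma nr_le1 (x : R[i]) : (`|x| <= 1) = (nr x <= 1). Proof. by rewrite nrE -oneC lecR. Qed.
Lemma nr_eq1 (x : R[i]) : (`|x| = 1) <-> (nr x = 1).
Proof. by rewrite nrE -oneC; split => [[]|->]. Qed.
Lemma nr_tri (x y : R[i]) : nr (x + y) <= nr x + nr y.
Proof. by rewrite -lecR addC -!nrE ler_normD. Qed.
Lemma nrM (x y : R[i]) : nr (x * y) = nr x * nr y.
Proof. by apply: complexI; rewrite mulC -!nrE normrM. Qed.
Lemma nrB (x y : R[i]) : nr (x - y) = nr (y - x).
Proof. by rewrite /nr distrC. Qed.
Lemma nrN (x : R[i]) : nr (- x) = nr x.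
Proof. by rewrite /nr normrN. Qed.

Lemma closure_le (F G : R -> R[i]) (s0 : R) : s0 < 1 -> ccont F s0 -> ccont G s0 ->
  (forall s, s0 < s -> s < 1 -> `|F s| <= `|G s|) -> `|F s0| <= `|G s0|.
Proof.
move=> s01 hF hG hle; rewrite nr_le real_leNgt ?num_real //; apply/negP => hlt.
set e := (nr (F s0) - nr (G s0)) / 2.
have e0 : 0 < e by rewrite /e; lra.
have e0' : (0 : R[i]) < (e%:C)%C by rewrite ltcR.
have h1 : \forall t \near s0, `|F s0 - F t| < (e%:C)%C :=
  (@cvgrPdist_lt R[i] R[i] R (nbhs s0) _ F (F s0)).1 hF _ e0'.
have h2 : \forall t \near s0, `|G s0 - G t| < (e%:C)%C :=
  (@cvgrPdist_lt R[i] R[i] R (nbhs s0) _ G (G s0)).1 hG _ e0'.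
have h3 : \forall t \near s0, `|F s0 - F t| < (e%:C)%C /\ `|G s0 - G t| < (e%:C)%C.
  by near=> t; split; near: t; [exact: h1|exact: h2].
move/nbhs_ballP: h3 => [d d0 hd].
set s := s0 + Num.min d (1 - s0) / 2.
have hm : 0 < Num.min d (1 - s0) by rewrite lt_min d0 subr_gt0.
have hm1 : Num.min d (1 - s0) <= d by rewrite ge_min lexx.
have hm2 : Num.min d (1 - s0) <= 1 - s0 by rewrite ge_min lexx orbT.
have [hF1 hG1] : `|F s0 - F s| < (e%:C)%C /\ `|G s0 - G s| < (e%:C)%C.
  apply: hd; rewrite -ball_normE /ball_ /= /s opprD addNKr normrN gtr0_norm; last by lra.
  lra.
have := hle s ltac:(rewrite /s; lra) ltac:(rewrite /s; lra).
move: hF1 hG1; rewrite !nrE !ltcR !nr_le => hF1 hG1 hs.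
have t1 := nr_tri (F s0 - F s) (F s); rewrite subrK in t1.
have t2 := nr_tri (G s0) (G s - G s0); rewrite addrC subrK nrB in t2.
rewrite /e in hF1 hG1; lra.
Unshelve. all: by end_near.
Qed.

Lemma nrV (y : R[i]) : nr y^-1 = (nr y)^-1.
Proof. by apply: complexI; rewrite fmorphV -!nrE normfV. Qed.
Lemma nrC (a : R) : 0 <= a -> nr ((a%:C)%C) = a.
Proof. by move=> a0; rewrite /nr ger0_norm ?lecR. Qed.
End Real.

Section Schur.
Variable R : realType.
Variable n' : nat.
Local Notation N := n'.+1.
Variables eps lam : 'I_N -> R[i].
Hypothesis heps : forall j, `|eps j| = 1.
Hypothesis hinj : injective eps.
Hypothesis hlam : forall j, `|lam j| < 1.

Definition zz (s : R) (j : 'I_N) : R[i] := eps j * (s%:C)%C.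

Fixpoint W (s : R) (k : nat) (j : 'I_N) : R[i] :=
  match k with
  | 0 => lam j / zz s j
  | k'.+1 => bl (W s k' (inord k')) (W s k' j) / bl (zz s (inord k')) (zz s j)
  end.

Definition valid (s : R) := forall k j : 'I_N, (k <= j)%N -> `|W s k j| < 1.

Lemma eps0 j : eps j != 0. Proof. by rewrite -normr_eq0 heps oner_eq0. Qed.

Lemma nr_zz s j : 0 <= s -> nr (zz s j) = s.
Proof. by move=> s0; rewrite /zz nrM nrC // (proj1 (nr_eq1 _) (heps j)) mul1r. Qed.

Lemma zz_ne0 s j : s != 0 -> zz s j != 0.
Proof.
move=> s0; rewrite mulf_neq0 ?eps0 //; apply: contra s0 => /eqP h.
by apply/eqP; move: h => [].
Qed.

Lemma zz_neq s i j : s != 0 -> i != j -> zz s i != zz s j.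
Proof.
move=> s0 ij; apply: contra ij => /eqP h; apply/eqP; apply: hinj.
have c0 : ((s%:C)%C : R[i]) != 0 by apply: contra s0 => /eqP [] ->.
by apply: (mulIf c0).
Qed.

Lemma inord_neq k (j : 'I_N) : (k < j)%N -> (inord k : 'I_N) != j.
Proof.
move=> kj; apply/negP => /eqP /(congr1 val) /=; rewrite inordK; last first.
  by apply: (ltn_trans kj).
by move=> h; move: kj; rewrite h ltnn.
Qed.

Lemma den_zz s i j : 0 < s -> s <= 1 -> i != j -> 1 - (zz s i)^* * zz s j != 0.
Proof.
move=> s0 s1 ij.
have hi : `|zz s i| <= 1 by rewrite nr_le1 nr_zz // ltW.
have hj : `|zz s j| <= 1 by rewrite nr_le1 nr_zz // ltW.
have := D1le hi hj; rewrite -normr_gt0 => h; apply: lt_le_trans h.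
by rewrite normr_gt0 subr_eq0; apply: zz_neq; [rewrite gt_eqF | rewrite eq_sym].
Qed.

Lemma bl_zz_ne0 s i j : 0 < s -> s <= 1 -> i != j -> bl (zz s i) (zz s j) != 0.
Proof.
move=> s0 s1 ij; rewrite /bl mulf_neq0 // ?invr_eq0 ?den_zz //.
by rewrite subr_eq0; apply: zz_neq; [rewrite gt_eqF | rewrite eq_sym].
Qed.

Lemma cc_zz s0 j : ccont (fun s => zz s j) s0.
Proof. have h := cc_mul (@cc_cst _ (eps j) s0) (@cc_emb _ s0). rewrite /zz. exact: h. Qed.

Lemma cont_W0 s0 j : s0 != 0 -> ccont (fun s => W s 0 j) s0.
Proof. move=> s0n; have h := cc_div (zz_ne0 j s0n) (@cc_cst _ (lam j) s0) (@cc_zz s0 j). exact: h. Qed.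

Lemma cont_WS s0 k (j : 'I_N) : 0 < s0 -> s0 <= 1 -> (k < j)%N ->
  ccont (fun s => W s k (inord k)) s0 -> ccont (fun s => W s k j) s0 ->
  `|W s0 k (inord k)| < 1 -> `|W s0 k j| <= 1 -> ccont (fun s => W s k.+1 j) s0.
Proof.
move=> s0p s01 kj hk hj g1 w1.
have kn := inord_neq kj.
exact: (@cc_div _ (fun s => bl (W s k (inord k)) (W s k j))
  (fun s => bl (zz s (inord k)) (zz s j)) s0 (bl_zz_ne0 s0p s01 kn)
  (cc_bl (den_ne0 g1 w1) hk hj) (cc_bl (den_zz s0p s01 kn) (@cc_zz s0 _) (@cc_zz s0 j))).
Qed.

Lemma valid_nat s : valid s -> forall m (j : 'I_N), (m <= j)%N -> `|W s m j| < 1.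
Proof.
move=> hv m j mj; have mN : (m < N)%N := leq_ltn_trans mj (ltn_ord j).
exact: (hv (Ordinal mN) j mj).
Qed.

Lemma valid1 : valid 1.
Proof.
suff H : forall k (j : 'I_N), (k <= j)%N -> `|W 1 k j| < 1.
  by move=> k j; exact: H.
elim=> [|k IH] j kj.
  by rewrite /= /zz oneC mulr1 normrM normfV heps invr1 mulr1; exact: hlam.
have kN : (k < N)%N := ltn_trans kj (ltn_ord j).
have kk : (k <= @inord n' k)%N by rewrite inordK.
have h1 := IH _ kk.
have h2 := IH _ (ltnW kj).
have kn := inord_neq kj.
have z1 : `|zz 1 j| = 1 by rewrite /zz oneC mulr1 heps.
rewrite /= normrM normfV (bl_eq1 z1 (den_zz ltr01 (lexx _) kn)) invr1 mulr1.
exact: bl_lt1.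
Qed.

Lemma cont_upto s0 K : 0 < s0 -> s0 <= 1 ->
  (forall k (j : 'I_N), (k < K)%N -> (k <= j)%N -> `|W s0 k j| < 1) ->
  forall k (j : 'I_N), (k <= K)%N -> (k <= j)%N -> ccont (fun s => W s k j) s0.
Proof.
move=> s0p s01 hv; elim=> [|k IH] j hk kj.
  by apply: cont_W0; rewrite gt_eqF.
have kN : (k < N)%N := ltn_trans kj (ltn_ord j).
have kk : (k <= @inord n' k)%N by rewrite inordK.
apply: (cont_WS s0p s01 kj).
- exact: IH (ltnW hk) kk.
- exact: IH (ltnW hk) (ltnW kj).
- exact: hv hk kk.
- exact: ltW (hv _ _ hk (ltnW kj)).
Qed.

Lemma open_valid s0 : 0 < s0 -> s0 <= 1 -> valid s0 -> \forall s \near s0, valid s.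
Proof.
move=> s0p s01 hv.
have H : forall k j : 'I_N, \forall s \near s0, (k <= j)%N -> `|W s k j| < 1.
  move=> k j; case: (leqP k j) => kj; last first.
    by near=> s.
  have hc := @cont_upto s0 k s0p s01 (fun m j' _ mj => valid_nat hv mj) k j (leqnn k) kj.
  have e0 : 0 < 1 - `|W s0 k j| by rewrite subr_gt0; exact: hv.
  have h2 : \forall t \near s0, `|W s0 k j - W t k j| < 1 - `|W s0 k j| :=
    (@cvgrPdist_lt R[i] R[i] R (nbhs s0) _ _ _).1 hc _ e0.
  near=> t => _.
  have ht : `|W s0 k j - W t k j| < 1 - `|W s0 k j| by near: t; exact: h2.
  move: ht; rewrite !nrE -oneC -subC ltcR'; rewrite -nrE nr_lt1 => ht.
  have := nr_tri (W s0 k j) (W t k j - W s0 k j); rewrite addrC subrK nrB.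
  lra.
have H2 : \forall s \near s0, forall k : 'I_N, forall j : 'I_N, (k <= j)%N -> `|W s k j| < 1.
  apply: (@filter_forall R 'I_N (fun k s => forall j : 'I_N, (k <= j)%N -> `|W s k j| < 1) (nbhs s0) _) => k.
  exact: (@filter_forall R 'I_N (fun j s => (k <= j)%N -> `|W s k j| < 1) (nbhs s0) _ (H k)).
exact: H2.
Unshelve. all: by end_near.
Qed.

Lemma blaschke_cons (u x : R[i]) a z : blaschke u (x :: a) z = bl x z * blaschke u a z.
Proof. by rewrite /blaschke big_cons /bl mulrCA. Qed.

Lemma build s0 k : 0 < s0 -> s0 < 1 -> (k < N)%N ->
  (forall m (j : 'I_N), (m < k)%N -> (m <= j)%N -> `|W s0 m j| < 1) ->
  `|W s0 k (inord k)| = 1 -> (forall j : 'I_N, (k <= j)%N -> W s0 k j = W s0 k (inord k)) ->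
  forall d, (d <= k)%N -> exists u a, [/\ `|u| = 1, size a = d, inD a &
     forall j : 'I_N, (k - d <= j)%N -> blaschke u a (zz s0 j) = W s0 (k - d) j].
Proof.
move=> s0p s01 kN hlt h1 hW; elim=> [|d IH] hd.
  exists (W s0 k (inord k)), [::]; split => // j; rewrite subn0 => kj.
  by rewrite /blaschke big_nil mulr1 hW.
have [u [a [hu sa ha hb]]] := IH (ltnW hd).
set m := (k - d.+1)%N.
have mS : m.+1 = (k - d)%N by rewrite /m subnSK.
have mk : (m < k)%N by rewrite /m; lia.
have mN : (m < N)%N := ltn_trans mk kN.
have mm : (m <= @inord n' m)%N by rewrite inordK.
have hg := hlt _ _ mk mm.
have zmD : `|zz s0 (inord m)| < 1 by rewrite nr_lt1 nr_zz // ltW.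
have ha' : inD (zz s0 (inord m) :: a) by rewrite /inD /= zmD.
have [u' [a' [hu' sa' ha'' hb']]] := mob_blaschke hu ha' hg.
exists u', a'; split => //; first by rewrite sa' /= sa.
move=> j mj.
have zj0 : zz s0 j != 0 by rewrite zz_ne0 // gt_eqF.
have zjD : `|zz s0 j| < 1 by rewrite nr_lt1 nr_zz // ltW.
rewrite (hb' _ zj0 zjD) blaschke_cons.
have [ej|nej] := eqVneq j (inord m).
  by rewrite ej bl_aa mul0r mobi0.
have mj' : (m < j)%N.
  rewrite ltn_neqAle mj andbT; apply: contra nej => /eqP ->; by rewrite inord_val.
rewrite hb -?mS // /=.
have hne : bl (zz s0 (inord m)) (zz s0 j) != 0.
  by apply: bl_zz_ne0 => //; [exact: ltW | rewrite eq_sym].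
rewrite mulrC divfK // mobi_bl //; exact: ltW (hlt _ _ mk (ltnW mj')).
Qed.


Lemma bl0z (z : R[i]) : bl 0 z = z.
Proof. by rewrite /bl conjC0 mul0r subr0 subr0 divr1. Qed.

Lemma main_N : exists (beta : R[i]) (B : R[i] -> R[i]) (k : nat),
    [/\ `|beta| < 1, (k <= N)%N, is_blaschke_of_order B k, B 0 = 0
      & forall j, B (eps j * beta) = lam j].
Proof.
have [/forallP hz|] := boolP [forall j, lam j == 0].
  exists 0, (blaschke 1 [:: 0]), 1%N; split => //.
  - by rewrite normr0 ltr01.
  - exists 1, [:: 0]; split => //; first by rewrite normr1.
    by rewrite /= normr0 ltr01.
  - by rewrite blaschke_cons bl_aa mul0r.
  - by move=> j; rewrite mulr0 blaschke_cons bl_aa mul0r (eqP (hz j)).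
rewrite negb_forall => /existsP [j0 hj0].
set L := nr (lam j0).
have L0 : 0 < L.
  rewrite lt_def nr_ge0 andbT; apply: contra hj0 => /eqP hL.
  by rewrite -normr_eq0 nrE -/L hL.
set S := [set t : R | 0 < t /\ t <= 1 /\ forall s, t <= s -> s <= 1 -> valid s].
have S1 : S 1.
  split; first exact: ltr01; split => // s s1 s2.
  have -> : s = 1 by apply/eqP; rewrite eq_le s2 s1.
  exact: valid1.
have lbS : forall t, S t -> L <= t.
  move=> t [t0 [t1 ht]]; rewrite real_leNgt ?num_real //; apply/negP => tL.
  have := ht t (lexx t) t1 ord0 j0 (leq0n _).
  rewrite /= nr_lt1 nrM nrV nr_zz ?ltW // ltr_pdivrMr // mul1r => h.
  by move: (lt_trans h tL); rewrite ltxx.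
set r := inf S.
have Sne : S !=set0 by exists 1.
have hlb : has_lbound S by exists L => t /lbS.
have Lr : L <= r by apply: lb_le_inf => // t /lbS.
have r0 : 0 < r by apply: lt_le_trans Lr.
have rle : forall t, S t -> r <= t by move=> t St; exact: (ge_inf hlb St).
have above : forall s, r < s -> s <= 1 -> valid s.
  move=> s rs s1.
  have [t St ts] := @inf_adherent R S (s - r) ltac:(by rewrite subr_gt0) (conj Sne hlb).
  case: St => t0 [t1 ht]; apply: ht => //; apply: ltW; move: ts; rewrite -/r; lra.
have r1 : r < 1.
  have := open_valid ltr01 (lexx 1) valid1; move/nbhs_ballP => [d d0 hd].
  set t := 1 - Num.min d 1 / 2.
  have hm : 0 < Num.min d 1 by rewrite lt_min d0 ltr01.
  have hm1 : Num.min d 1 <= d by rewrite ge_min lexx.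
  have hm2 : Num.min d 1 <= 1 by rewrite ge_min lexx orbT.
  have St : S t.
    split; first by rewrite /t; lra.
    split; first by rewrite /t; lra.
    move=> s ts s1; apply: hd; rewrite -ball_normE /ball_ /= ger0_norm; last by lra.
    rewrite /t in ts; lra.
  have := rle t St; rewrite /t; lra.
have notv : ~ valid r.
  move=> hv; have := open_valid r0 (ltW r1) hv; move/nbhs_ballP => [d d0 hd].
  set t := r - Num.min d r / 2.
  have hm : 0 < Num.min d r by rewrite lt_min d0 r0.
  have hm1 : Num.min d r <= d by rewrite ge_min lexx.
  have hm2 : Num.min d r <= r by rewrite ge_min lexx orbT.
  have St : S t.
    split; first by rewrite /t; lra.
    split; first by rewrite /t; lra.
    move=> s ts s1; have [sr|rs] := leP s r.
      apply: hd; rewrite -ball_normE /ball_ /= ger0_norm; last by lra.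
      rewrite /t in ts; lra.
    exact: above.
  have := rle t St; rewrite /t; lra.
pose Pn k := [exists j : 'I_N, (k <= j)%N && ~~ (`|W r k j| < 1)].
have exP : exists k, Pn k.
  have [ex|nex] := boolP [exists k : 'I_N, Pn k].
    by move/existsP: ex => [k hk]; exists k.
  exfalso; apply: notv => k j kj.
  move/existsPn: nex => /(_ k) /existsPn /(_ j).
  by rewrite kj /= negbK.
case: (ex_minnP exP) => k Pk kmin.
have [j1 /andP [kj1 nj1]] := existsP Pk.
have kN : (k < N)%N := leq_ltn_trans kj1 (ltn_ord j1).
have hlt : forall m (j : 'I_N), (m < k)%N -> (m <= j)%N -> `|W r m j| < 1.
  move=> m j mk mj; apply/negPn/negP => hn.
  have Pm : Pn m by apply/existsP; exists j; rewrite mj hn.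
  by move: (kmin m Pm); rewrite leqNgt mk.
have contk : forall j : 'I_N, (k <= j)%N -> ccont (fun s => W s k j) r.
  move=> j kj; exact: (@cont_upto r k r0 (ltW r1) hlt k j (leqnn k) kj).
have le1 : forall j : 'I_N, (k <= j)%N -> `|W r k j| <= 1.
  move=> j kj.
  have := @closure_le R (fun s => W s k j) (fun _ => 1) r r1 (contk j kj) (@cc_cst _ 1 r).
  rewrite normr1; apply => s rs s1.
  exact: ltW (valid_nat (above s rs (ltW s1)) kj).
pose kk : 'I_N := inord k.
have vkk : val kk = k := inordK kN.
have kkk : (k <= kk)%N by rewrite vkk.
have gam1 : `|W r k kk| = 1.
  apply/eqP; apply/negPn/negP => hne.
  have glt : `|W r k kk| < 1 by rewrite lt_neqAle hne le1.
  have w1 : `|W r k j1| = 1.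
    by apply/eqP; rewrite eq_le le1 //= real_leNgt ?num_real.
  have kj1' : (k < j1)%N.
    rewrite ltn_neqAle kj1 andbT; apply/negP => /eqP ej.
    have ej' : kk = j1 by apply: val_inj; rewrite vkk.
    by move: glt; rewrite ej' w1 ltxx.
  have c2 := cont_WS r0 (ltW r1) kj1' (contk kk kkk) (contk j1 kj1) glt (le1 j1 kj1).
  have := @closure_le R (fun s => W s k.+1 j1) (fun _ => 1) r r1 c2 (@cc_cst _ 1 r).
  have hb : `|bl (zz r kk) (zz r j1)| < 1.
    by apply: bl_lt1; rewrite nr_lt1 nr_zz // ltW.
  have hb0 := bl_zz_ne0 r0 (ltW r1) (inord_neq kj1').
  have hg1 : `|bl (W r k kk) (W r k j1)| = 1 by apply: bl_eq1 => //; exact: den_ne0 glt (le1 j1 kj1).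
  rewrite normr1 /= normrM normfV hg1 mul1r => h.
  have : `|bl (zz r kk) (zz r j1)|^-1 <= 1.
    apply: h => s rs s1.
    exact: ltW (valid_nat (above s rs (ltW s1)) kj1').
  move=> hinv; rewrite -normr_gt0 in hb0.
  have := invf_gt1 hb0; rewrite hb => h2.
  by move: (lt_le_trans h2 hinv); rewrite ltxx.
have eqW : forall j : 'I_N, (k <= j)%N -> W r k j = W r k kk.
  move=> j kj; have [ej|nej] := eqVneq j kk; first by rewrite ej.
  have kj' : (k < j)%N.
    rewrite ltn_neqAle kj andbT; apply: contra nej => /eqP e.
    by apply/eqP; apply: val_inj; rewrite vkk.
  have kn := inord_neq kj'.
  have cF := cc_sub (contk j kj) (contk kk kkk).
  have cG := cc_mul (cc_bl (den_zz r0 (ltW r1) kn) (@cc_zz r kk) (@cc_zz r j))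
    (cc_sub (@cc_cst _ 1 r) (cc_mul (cc_conj (contk kk kkk)) (contk j kj))).
  have := @closure_le R _ _ r r1 cF cG.
  have hb : `|bl (zz r kk) (zz r j)| < 1.
    by apply: bl_lt1; rewrite nr_lt1 nr_zz // ltW.
  have hyp : forall s, r < s -> s < 1 ->
      `|W s k j - W s k kk| <= `|bl (zz s kk) (zz s j) * (1 - (W s k kk)^* * W s k j)|.
    move=> s rs s1; have vs := above s rs (ltW s1).
    have s0 : 0 < s by apply: lt_trans rs.
    have hg := valid_nat vs kkk.
    have hw := valid_nat vs kj.
    have hk1 := valid_nat vs kj'.
    have hden := den_ne0 hg (ltW hw).
    have hbs := bl_zz_ne0 s0 (ltW s1) kn.
    have E : W s k j - W s k kk = W s k.+1 j * (bl (zz s kk) (zz s j) * (1 - (W s k kk)^* * W s k j)).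
      by rewrite /= mulrA divfK // /bl divfK.
    rewrite E normrM; apply: ler_piMl => //; exact: ltW.
  move=> /(_ hyp) /=.
  set g := W r k kk; set w := W r k j.
  have gg : g^* * g = 1 by rewrite mulrC -normCK gam1 expr1n.
  have -> : 1 - g^* * w = g^* * (g - w) by rewrite mulrBr gg.
  rewrite normrM [`|g^* * _|]normrM norm_conjC gam1 mul1r distrC.
  move: hb; rewrite nr_lt1 => hb; rewrite -normrM nr_le nrM => hle.
  have e1 := nrB g w.
  have x0 := nr_ge0 (w - g); have b0 := nr_ge0 (bl (zz r kk) (zz r j)).
  have : nr (w - g) = 0 by nra.
  move/(congr1 (fun x => (x%:C)%C)); rewrite -nrE => /eqP; rewrite normr_eq0 subr_eq0.
  by move/eqP.
have [u [a [hu sa ha hb]]] := build r0 r1 kN hlt gam1 eqW (leqnn k).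
exists ((r%:C)%C), (blaschke u (0 :: a)), k.+1; split => //.
- by rewrite ger0_norm ?lecR ?ltW // -oneC ltcR.
- exists u, (0 :: a); split => //; first by rewrite /= sa.
  by rewrite /= normr0 ltr01.
- by rewrite blaschke_cons bl_aa mul0r.
- move=> j; rewrite blaschke_cons bl0z.
  have -> : eps j * (r%:C)%C = zz r j by [].
  rewrite hb ?subnn // /= mulrC divfK //; by rewrite zz_ne0 // gt_eqF.
Qed.

End Schur.

Theorem lemma8 (R : realType) (n : nat) (hn : (0 < n)%N)
  (eps lam : 'I_n -> R[i])
  (heps : forall j, `|eps j| = 1) (hinj : injective eps)
  (hlam : forall j, `|lam j| < 1) :
  exists (beta : R[i]) (B : R[i] -> R[i]) (k : nat),
    [/\ `|beta| < 1, (k <= n)%N, is_blaschke_of_order B k, B 0 = 0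
      & forall j, B (eps j * beta) = lam j].
Proof.
case: n hn eps lam heps hinj hlam => // n' _ eps lam heps hinj hlam.
exact: (main_N heps hinj hlam).
Qed.
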